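(* Let $p(n)$ be a function. For each function $L:\{0,1\}^n\to\{0,1\}$ let $|\psi_L\rangle$ be a $p(n)$-qubit state. Let $\mathcal{Q}$ be any (computationally unbounded) quantum algorithm that, on input $x\in\{0,1\}^n$, performs a measurement depending only on $x$ (and not on $L$) on $|\psi_L\rangle$ and outputs a bit $\mathcal{Q}(x,|\psi_L\rangle)$. Then $$\Pr_{x,L}[\mathcal{Q}(x,|\psi_L\rangle)=L(x)]\le\frac12+O\Big(\big(p(n)/2^n\big)^{1/3}\Big),$$ where $L$ is a uniformly random function and $x$ is uniform in $\{0,1\}^n$. *)

(* Defs.v *)
From HB Require Import structures.
From mathcomp Require Import all_boot all_order all_algebra.
From mathcomp Require Import reals exp.
From mathcomp Require Import complex.
Set Implicit Arguments. Unset Strict Implicit. Unset Printing Implicit Defensive.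
Import Order.TTheory GRing.Theory Num.Theory.
Local Open Scope ring_scope.
Local Open Scope sesquilinear_scope.

Definition bits (n : nat) := n.-tuple bool.
Definition boolfun (n : nat) := {ffun bits n -> bool}.

Definition is_state (R : realType) (m : nat) (v : 'cV[R[i]]_(2 ^ m)) : Prop :=
  (v ^t* *m v) 0 0 = 1.

(* A two-outcome measurement (POVM {E, 1 - E}) on m qubits is given by its
   effect E for outcome 1: a Hermitian operator with 0 <= E <= 1. *)
Definition is_effect (R : realType) (m : nat) (E : 'M[R[i]]_(2 ^ m)) : Prop :=
  E ^t* = E /\
  forall v : 'cV[R[i]]_(2 ^ m),
    0 <= (v ^t* *m E *m v) 0 0 /\ (v ^t* *m E *m v) 0 0 <= (v ^t* *m v) 0 0.

Definition prob_one (R : realType) (m : nat) (E : 'M[R[i]]_(2 ^ m))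
  (v : 'cV[R[i]]_(2 ^ m)) : R :=
  complex.Re ((v ^t* *m E *m v) 0 0).

(* Pr_{x,L}[ Q(x, |psi_L>) = L(x) ], x uniform in {0,1}^n, L uniform random
   function, where Q on input x measures with the POVM {E x, 1 - E x}
   and outputs the outcome. *)
Definition success_prob (R : realType) (n m : nat)
  (psi : boolfun n -> 'cV[R[i]]_(2 ^ m)) (E : bits n -> 'M[R[i]]_(2 ^ m)) : R :=
  (#|{: bits n}|%:R * #|{: boolfun n}|%:R)^-1 *
  \sum_(x : bits n) \sum_(L : boolfun n)
     (if L x then prob_one (E x) (psi L) else 1 - prob_one (E x) (psi L)).

(* Main.v *)
Require Import Defs.
From HB Require Import structures.
From mathcomp Require Import all_boot all_order all_algebra.
From mathcomp Require Import reals exp.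
From mathcomp Require Import complex.
From mathcomp Require Import ring lra zify.
Set Implicit Arguments. Unset Strict Implicit. Unset Printing Implicit Defensive.
Import Order.TTheory GRing.Theory Num.Theory.
Local Open Scope ring_scope.

Module PartA.
Local Open Scope sesquilinear_scope.


Section Gen.
Variable C : numClosedFieldType.
Variable k : nat.
Implicit Types u v w : 'cV[C]_k.
Implicit Types A B T : 'M[C]_k.

Definition dotc u v := (u ^t* *m v) 0 0.

Lemma dotcE u v : dotc u v = \sum_i (u i 0)^* * v i 0.
Proof. by rewrite /dotc mxE; apply: eq_bigr => i _; rewrite !mxE. Qed.

Lemma dotc_ge0 u : 0 <= dotc u u.
Proof. by rewrite dotcE sumr_ge0 // => i _; rewrite mulrC mul_conjC_ge0. Qed.

Lemma dotc_conj u v : (dotc u v)^* = dotc v u.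
Proof.
rewrite !dotcE rmorph_sum; apply: eq_bigr => i _.
by rewrite rmorphM /= conjCK mulrC.
Qed.

Lemma dotcDr u v w : dotc u (v + w) = dotc u v + dotc u w.
Proof. by rewrite !dotcE -big_split; apply: eq_bigr => i _; rewrite !mxE mulrDr. Qed.
Lemma dotcDl u v w : dotc (v + w) u = dotc v u + dotc w u.
Proof. by rewrite !dotcE -big_split; apply: eq_bigr => i _; rewrite !mxE rmorphD /= mulrDl. Qed.
Lemma dotcNr u v : dotc u (- v) = - dotc u v.
Proof. by rewrite !dotcE -sumrN; apply: eq_bigr => i _; rewrite !mxE mulrN. Qed.
Lemma dotcNl u v : dotc (- v) u = - dotc v u.
Proof. by rewrite !dotcE -sumrN; apply: eq_bigr => i _; rewrite !mxE rmorphN /= mulNr. Qed.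
Lemma dotcZr a u v : dotc u (a *: v) = a * dotc u v.
Proof. by rewrite !dotcE mulr_sumr; apply: eq_bigr => i _; rewrite !mxE mulrCA. Qed.
Lemma dotcZl a u v : dotc (a *: u) v = a^* * dotc u v.
Proof. by rewrite !dotcE mulr_sumr; apply: eq_bigr => i _; rewrite !mxE rmorphM /= mulrA. Qed.

Lemma trmxC_mul (m n p : nat) (A : 'M[C]_(m,n)) (B : 'M[C]_(n,p)) :
  (A *m B) ^t* = B ^t* *m A ^t*.
Proof. by rewrite trmx_mul map_mxM. Qed.

Lemma herm_dotc A u v : A ^t* = A -> dotc u (A *m v) = dotc (A *m u) v.
Proof. by move=> hA; rewrite /dotc trmxC_mul hA mulmxA. Qed.

Lemma dotc_rows u v : dotc u v = dotmx (v^T) (u^T).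
Proof.
rewrite dotcE dotmxE mxE; apply: eq_bigr => i _; by rewrite !mxE mulrC.
Qed.

Lemma CS u v : `|dotc u v| ^+ 2 <= dotc u u * dotc v v.
Proof.
rewrite !dotc_rows mulrC.
have [h _] := CauchySchwarz (@dotmx C k) (v^T) (u^T).
by [].
Qed.


Definition nrm u := dotc u u.

Lemma nrm_ge0 u : 0 <= nrm u. Proof. exact: dotc_ge0. Qed.

Lemma opnorm (M : 'M[C]_k) v : M ^t* = M ->
  (forall x, dotc x (M *m x) <= nrm x / 2%:R) ->
  (forall x, - (nrm x / 2%:R) <= dotc x (M *m x)) ->
  4%:R * nrm (M *m v) <= nrm v.
Proof.
move=> hM up lo; set w := M *m v.
have hv : dotc v (M *m w) = dotc w w by rewrite herm_dotc.
have e1 : dotc (w + w + v) (M *m (w + w + v)) - dotc (w + w - v) (M *m (w + w - v))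
          = 8%:R * nrm w.
  rewrite !mulmxDr mulmxN -/w !dotcDl !dotcDr !dotcNl !dotcNr hv /nrm; ring.
have e2 : nrm (w + w + v) + nrm (w + w - v) = 8%:R * nrm w + 2%:R * nrm v.
  rewrite /nrm !dotcDl !dotcDr !dotcNl !dotcNr; ring.
have h1 := up (w + w + v); have h2 := lo (w + w - v).
have : 8%:R * nrm w <= 4%:R * nrm w + nrm v.
  rewrite -e1.
  have -> : 4%:R * nrm w + nrm v = (nrm (w + w + v) + nrm (w + w - v)) / 2%:R.
    by rewrite e2; field.
  rewrite mulrDl; apply: lerD => //; by rewrite lerNl.
have -> : 8%:R * nrm w = 4%:R * nrm w + 4%:R * nrm w by ring.
by rewrite lerD2l.
Qed.

End Gen.

End PartA.
Import PartA.

Module PartB.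
Local Open Scope sesquilinear_scope.


Section Gen2.
Variable C : numClosedFieldType.
Variable k : nat.
Implicit Types u v w : 'cV[C]_k.
Implicit Types A B T : 'M[C]_k.

Lemma nrmE v : nrm v = \sum_i `|v i 0| ^+ 2.
Proof. by rewrite /nrm dotcE; apply: eq_bigr => i _; rewrite normCK mulrC. Qed.

Lemma entry_le_nrm v i : `|v i 0| ^+ 2 <= nrm v.
Proof.
rewrite nrmE (bigD1 i) //= lerDl sumr_ge0 // => j _.
by rewrite exprn_ge0.
Qed.

Lemma herm_mul A B : A ^t* = A -> B ^t* = B -> A *m B = B *m A ->
  (A *m B) ^t* = A *m B.
Proof. by move=> hA hB hAB; rewrite trmxC_mul hA hB hAB. Qed.

Lemma herm_exp A n : A ^t* = A -> (A ^+ n) ^t* = A ^+ n.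
Proof.
move=> hA; elim: n => [|n IH].
  rewrite expr0; apply/matrixP => i j; rewrite !mxE eq_sym.
  by case: (_ == _); rewrite /= ?conjC1 ?conjC0.
by rewrite exprS -mulmxE trmxC_mul IH hA mulmxE -exprS exprSr.
Qed.

Lemma nrm_herm_le T psi : T ^t* = T ->
  nrm (T *m psi) <= nrm psi * \tr (T *m T).
Proof.
move=> hT.
have eT : forall i j, T i j = (T j i)^*.
  by move=> i j; rewrite -{1}hT !mxE.
rewrite nrmE /mxtrace mulr_sumr; apply: ler_sum => i _.
pose r : 'cV[C]_k := \col_j (T i j)^*.
have -> : (T *m psi) i 0 = dotc r psi.
  by rewrite dotcE mxE; apply: eq_bigr => j _; rewrite !mxE conjCK.
apply: (le_trans (CS r psi)); rewrite mulrC ler_wpM2l ?dotc_ge0 //.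
rewrite /nrm dotcE mxE le_eqVlt; apply/orP; left; apply/eqP.
by apply: eq_bigr => j _; rewrite !mxE conjCK -eT.
Qed.

End Gen2.

End PartB.
Import PartB.

Module PartC.
Local Open Scope sesquilinear_scope.


Section Gen3.
Variable C : numClosedFieldType.
Variable k : nat.
Implicit Types u v w : 'cV[C]_k.
Implicit Types A B T S : 'M[C]_k.

Lemma quad_sq T psi : T ^t* = T -> nrm psi = 1 ->
  `|dotc psi (T *m psi)| ^+ 2 <= dotc psi (T ^+ 2 *m psi).
Proof.
move=> hT hpsi; apply: (le_trans (CS psi (T *m psi))).
by rewrite -/(nrm psi) hpsi mul1r expr2 -mulmxE -mulmxA [X in _ <= X]herm_dotc.
Qed.

Lemma quad_pow S psi j : S ^t* = S -> nrm psi = 1 ->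
  `|dotc psi (S *m psi)| ^+ (2 ^ j.+1) <= dotc psi (S ^+ (2 ^ j.+1) *m psi).
Proof.
move=> hS hpsi; elim: j => [|j IH]; first by rewrite expn1 quad_sq.
have hT := herm_exp (2 ^ j.+1) hS.
have h0 : 0 <= `|dotc psi (S *m psi)| ^+ (2 ^ j.+1) by rewrite exprn_ge0.
have h1 : 0 <= dotc psi (S ^+ (2 ^ j.+1) *m psi) by apply: le_trans IH.
rewrite expnS mulnC !exprM.
apply: (le_trans (y := dotc psi (S ^+ (2 ^ j.+1) *m psi) ^+ 2)).
  by rewrite ler_pXn2r // nnegrE.
rewrite -{1}(ger0_norm h1) (le_trans (quad_sq hT hpsi)) //.
Qed.

Lemma quad_tr S psi j : S ^t* = S -> nrm psi = 1 ->
  `|dotc psi (S *m psi)| ^+ (2 ^ j.+1) <= \tr (S ^+ (2 ^ j.+1)).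
Proof.
move=> hS hpsi; apply: (le_trans (quad_pow j hS hpsi)).
have hT := herm_exp (2 ^ j) hS.
have -> : S ^+ (2 ^ j.+1) = S ^+ (2 ^ j) *m S ^+ (2 ^ j).
  by rewrite mulmxE -exprD expnS mul2n addnn.
rewrite -mulmxA herm_dotc //.
have := nrm_herm_le psi hT; rewrite hpsi mul1r.
by [].
Qed.

End Gen3.

End PartC.
Import PartC.

Module PartD.
Local Open Scope sesquilinear_scope.


Section Gen4.
Variable C : numClosedFieldType.
Variable k : nat.
Implicit Types u v w : 'cV[C]_k.
Implicit Types A B T S P : 'M[C]_k.

Definition mprod (s : seq 'M[C]_k) : 'M[C]_k := foldr mulmx 1%:M s.

Lemma mprod_contract (s : seq 'M[C]_k) v :
  (forall M, M \in s -> forall x, 4%:R * nrm (M *m x) <= nrm x) ->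
  4%:R ^+ (size s) * nrm (mprod s *m v) <= nrm v.
Proof.
elim: s v => [|M s IH] v hs /=.
  by rewrite expr0 mul1r mul1mx.
rewrite exprS -mulrA -mulmxA.
have h1 := hs M (mem_head _ _) (mprod s *m v).
apply: (le_trans _ (IH v _)); last by move=> N hN; apply: hs; rewrite inE hN orbT.
by rewrite mulrCA ler_wpM2l ?exprn_ge0 ?ler0n.
Qed.

Lemma tr_bound P m : (forall v, 4%:R ^+ m * nrm (P *m v) <= nrm v) ->
  2%:R ^+ m * `|\tr P| <= k%:R.
Proof.
move=> hP.
have hi : forall i, 2%:R ^+ m * `|P i i| <= 1.
  move=> i; pose e : 'cV[C]_k := delta_mx i 0.
  have he : nrm e = 1.
    rewrite nrmE (bigD1 i) //= big1 => [|j hj]; first by rewrite !mxE !eqxx normr1 expr1n addr0.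
    by rewrite !mxE (negPf hj) normr0 expr0n.
  have hPe : (P *m e) i 0 = P i i by rewrite /e -colE !mxE.
  have := le_trans (ler_wpM2l (exprn_ge0 m (ler0n _ 4)) (entry_le_nrm (P *m e) i)) (hP e).
  rewrite hPe he => h; rewrite -(expr_le1 (n := 2)) //; last by rewrite mulr_ge0 ?exprn_ge0 ?ler0n.
  by rewrite exprMn -exprM mulnC exprM -natrX.
rewrite /mxtrace (le_trans (ler_wpM2l (exprn_ge0 m (ler0n _ 2)) (ler_norm_sum _ _ _))) //.
rewrite mulr_sumr; apply: (le_trans (ler_sum _ (fun i _ => hi i))).
by rewrite sumr_const card_ord.
Qed.

End Gen4.

End PartD.
Import PartD.

Module PartE.
Local Open Scope sesquilinear_scope.


Lemma big_tuple_cons (V : nmodType) (X : finType) m (F : (m.+1).-tuple X -> V) :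
  \sum_(t : (m.+1).-tuple X) F t = \sum_x \sum_(u : m.-tuple X) F [tuple of x :: u].
Proof.
rewrite pair_big /=.
rewrite (reindex (fun p : X * m.-tuple X => [tuple of p.1 :: p.2])) //=.
exists (fun t : (m.+1).-tuple X => (thead t, [tuple of behead t])) => [[x u] _|t _] /=.
  by rewrite theadE; congr pair; apply: val_inj.
by rewrite -tuple_eta.
Qed.

Lemma big_tuple0 (V : nmodType) (X : finType) (F : 0.-tuple X -> V) :
  \sum_(t : 0.-tuple X) F t = F [tuple].
Proof. by rewrite (big_pred1 [tuple]) // => t /=; rewrite [t]tuple0; apply/esym/eqP. Qed.

Section Expand.
Variable C : numClosedFieldType.
Variable k : nat.
Variable X : finType.
Variable M : X -> 'M[C]_k.

Definition eps (L : {ffun X -> bool}) x : C := if L x then 1 else -1.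
Definition SL L := \sum_x eps L x *: M x.

Lemma expandS L m : SL L ^+ m =
  \sum_(t : m.-tuple X) (\prod_(y <- t) eps L y) *: mprod (map M t).
Proof.
elim: m => [|m IH].
  by rewrite big_tuple0 /= big_nil scale1r expr0.
rewrite exprS IH big_tuple_cons /SL mulr_suml; apply: eq_bigr => x _.
rewrite mulr_sumr; apply: eq_bigr => u _ /=.
by rewrite big_cons -mulmxE -scalemxAl -scalemxAr scalerA.
Qed.

Lemma prod_count L (s : seq X) :
  \prod_(y <- s) eps L y = \prod_x eps L x ^+ count_mem x s.
Proof.
elim: s => [|y s IH]; first by rewrite big_nil big1 // => x _; rewrite expr0.
rewrite big_cons IH /= (bigD1 y) //= [in RHS](bigD1 y) //= eqxx /=.
rewrite add1n exprS mulrA; congr (_ * _); apply: eq_bigr => x hx.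
by rewrite eq_sym (negPf hx) add0n.
Qed.

Definition evenseq (s : seq X) := [forall x, ~~ odd (count_mem x s)].

Lemma coef_sum (s : seq X) :
  \sum_(L : {ffun X -> bool}) \prod_(y <- s) eps L y =
  if evenseq s then (2 ^ #|X|)%:R else 0.
Proof.
under eq_bigr do rewrite prod_count.
rewrite -(bigA_distr_bigA (fun x (b : bool) => (if b then 1 else -1 : C) ^+ count_mem x s)) /=.
under eq_bigr do rewrite big_bool /= expr1n.
case: ifP => [/forallP he|].
  rewrite natrX -prodr_const; apply: eq_bigr => x _.
  by rewrite -signr_odd (negPf (he x)) expr0.
move/negbT; rewrite negb_forall => /existsP [x /negPn hx].
by rewrite (bigD1 x) //= -signr_odd hx expr1 addrN mul0r.
Qed.

End Expand.
Arguments eps {C X}.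

End PartE.
Import PartE.

Module PartF.
Local Open Scope sesquilinear_scope.


Section Bound.
Variable C : numClosedFieldType.
Variable k : nat.
Variable X : finType.
Variable M : X -> 'M[C]_k.
Hypothesis hM : forall x v, 4%:R * nrm (M x *m v) <= nrm v.

Lemma sum_tr_bound m :
  2%:R ^+ m * `|\sum_(L : {ffun X -> bool}) \tr (SL M L ^+ m)| <=
  ((2 ^ #|X|) * k * #|[set t : m.-tuple X | evenseq t]|)%:R.
Proof.
have e1 : \sum_(L : {ffun X -> bool}) \tr (SL M L ^+ m) =
   \sum_(t : m.-tuple X) (if evenseq t then (2 ^ #|X|)%:R else 0) * \tr (mprod (map M t)).
  under eq_bigr do rewrite expandS raddf_sum /=.
  rewrite exchange_big /=; apply: eq_bigr => t _.
  rewrite -coef_sum mulr_suml; apply: eq_bigr => L _.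
  by rewrite mxtraceZ.
have e2 : ((2 ^ #|X|) * k * #|[set t : m.-tuple X | evenseq t]|)%:R =
    \sum_(t : m.-tuple X) (if evenseq t then (2 ^ #|X| * k)%:R else 0 : C).
  by rewrite -big_mkcond /= sumr_const cardsE natrM mulr_natr.
rewrite e1 e2.
apply: (le_trans (ler_wpM2l (exprn_ge0 m (ler0n _ 2)) (ler_norm_sum _ _ _))).
rewrite mulr_sumr; apply: ler_sum => t _.
rewrite normrM mulrCA.
have ht : 2%:R ^+ m * `|\tr (mprod (map M t))| <= k%:R.
  apply: tr_bound => v.
  have := mprod_contract v (s := map M t) _; rewrite size_map size_tuple; apply.
  by move=> N /mapP [x _ ->]; apply: hM.
case: ifP => _; last by rewrite normr0 mul0r.
rewrite natrM ger0_norm ?ler0n //; apply: ler_wpM2l => //.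
Qed.

End Bound.

End PartF.
Import PartF.

Module PartG.
Local Open Scope nat_scope.

Section Count.
Variable X : finType.

Definition cnt m := #|[set t : m.-tuple X | evenseq t]|.

Lemma recon (x : X) (u : seq X) : x \in u ->
  u = take (index x u) (rem x u) ++ x :: drop (index x u) (rem x u).
Proof.
move=> xu; have hi : index x u < size u by rewrite index_mem.
have hs : size (take (index x u) u) = index x u by rewrite size_take hi.
rewrite remE take_size_cat // drop_size_cat //.
by rewrite -{1}(cat_take_drop (index x u) u) (drop_nth x) // nth_index.
Qed.

Lemma mem_of_even (x : X) (u : seq X) : evenseq (x :: u) -> x \in u.
Proof.
move=> /forallP /(_ x) /=; rewrite eqxx add1n /=.
rewrite -has_pred1 has_count; case: (count _ _) => //.
Qed.

Lemma even_rem (x : X) (u : seq X) : evenseq (x :: u) -> evenseq (rem x u).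
Proof.
move=> he; have xu := mem_of_even he.
move/forallP: he => he; apply/forallP => y.
have := he y; rewrite count_mem_rem /=.
case: (eqVneq x y) => [<-|hxy]; last by rewrite add0n subn0.
have : 0 < count_mem x u by rewrite -has_count has_pred1.
by case: (count_mem x u) => // c _ /=; rewrite subn1 /= !negbK.
Qed.

Lemma cnt_rec m : cnt m.+2 <= #|X| * m.+1 * cnt m.
Proof.
pose dflt (x : X) : m.-tuple X := [tuple of nseq m x].
pose phi (t : (m.+2).-tuple X) : X * 'I_m.+1 * m.-tuple X :=
  (thead t, inord (index (thead t) (behead t)), insubd (dflt (thead t)) (rem (thead t) (behead t))).
pose A := [set t : (m.+2).-tuple X | evenseq t].
have heq : forall t, t \in A -> val t = thead t :: behead t.
  by move=> t _; rewrite [in LHS](tuple_eta t).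
have hmem : forall t, t \in A -> thead t \in behead t.
  by move=> t; rewrite inE => ht; apply: mem_of_even; rewrite -(heq t) // inE.
have hsz : forall t, t \in A -> size (rem (thead t) (behead t)) == m.
  by move=> t ht; rewrite size_rem ?hmem // size_behead size_tuple.
have hinj : {in A &, injective phi}.
  move=> t1 t2 h1 h2 [e1 e2 e3].
  apply: val_inj; rewrite (heq t1) // (heq t2) // e1; congr cons.
  have i1 := hmem _ h1; have i2 := hmem _ h2.
  have r : rem (thead t2) (behead t1) = rem (thead t2) (behead t2).
    have := congr1 val e3; rewrite !val_insubd -e1 hsz // e1 hsz //.
  have ix : index (thead t2) (behead t1) = index (thead t2) (behead t2).
    have s1 : size (behead t1) = m.+1 by rewrite size_behead size_tuple.
    have s2 : size (behead t2) = m.+1 by rewrite size_behead size_tuple.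
    have hi1 : index (thead t2) (behead t1) < m.+1 by have := hmem _ h1; rewrite -index_mem s1 e1.
    have hi2 : index (thead t2) (behead t2) < m.+1 by have := hmem _ h2; rewrite -index_mem s2.
    by move: e2; rewrite e1 => /(congr1 val) /=; rewrite !inordK.
  rewrite -e1 in r ix.
  by rewrite (recon i1) (recon i2) -e1 r ix.
rewrite /cnt -/A -(card_in_imset hinj).
apply: (leq_trans (subset_leq_card (_ : _ \subset setX (setX setT setT) [set t : m.-tuple X | evenseq t]))).
  apply/subsetP => _ /imsetP [t ht ->]; rewrite !inE /=.
  rewrite val_insubd hsz //; apply: even_rem; rewrite -(heq t) //.
  by move: ht; rewrite inE.
by rewrite !cardsX !cardsT card_ord.
Qed.

Lemma cnt_bound h : cnt (h.*2) <= (h.*2) ^ h * #|X| ^ h.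
Proof.
elim: h => [|h IH].
  rewrite /cnt /= expn0 muln1 (leq_trans (max_card _)) //.
  by rewrite card_tuple expn0.
rewrite doubleS (leq_trans (cnt_rec _)) //.
rewrite expnS [X in _ <= _ * X]expnS mulnACA.
apply: leq_mul; first by rewrite mulnC leq_mul // ltnW.
apply: (leq_trans IH); apply: leq_mul => //.
by case: (posnP h) => [->|hp] //; rewrite leq_exp2r // ltnW.
Qed.

End Count.

End PartG.
Import PartG.

Module PartH.
Local Open Scope sesquilinear_scope.


Section Gen5.
Variable C : numClosedFieldType.
Variable k : nat.
Implicit Types u v w : 'cV[C]_k.
Implicit Types A B T S P : 'M[C]_k.

Lemma dotc_sumr (I : finType) u (F : I -> 'cV[C]_k) :
  dotc u (\sum_i F i) = \sum_i dotc u (F i).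
Proof. by rewrite /dotc mulmx_sumr summxE. Qed.

Lemma conj_half : (2%:R^-1 : C)^* = 2%:R^-1.
Proof. by rewrite fmorphV /= conjC_nat. Qed.

Definition halfmx A : 'M[C]_k := A - (2%:R^-1 : C)%:M.

Lemma halfmx_herm A : A ^t* = A -> (halfmx A) ^t* = halfmx A.
Proof.
move=> hA; apply/matrixP => i j; have := congr1 (fun B => B i j) hA.
rewrite !mxE => <-; rewrite rmorphB /=; congr (_ - _).
rewrite eq_sym; case: (_ == _); rewrite /= ?mulr1n ?mulr0n ?conj_half //.
by rewrite conjC0.
Qed.

Lemma halfmx_dotc A v : dotc v (halfmx A *m v) = dotc v (A *m v) - 2%:R^-1 * nrm v.
Proof. by rewrite mulmxBl mul_scalar_mx dotcDr dotcNr dotcZr. Qed.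

Lemma halfmx_contract A : A ^t* = A ->
  (forall v, 0 <= dotc v (A *m v) /\ dotc v (A *m v) <= nrm v) ->
  forall v, 4%:R * nrm (halfmx A *m v) <= nrm v.
Proof.
move=> hA he v; apply: opnorm; first exact: halfmx_herm.
  move=> x; rewrite halfmx_dotc; have [_ h2] := he x.
  have -> : nrm x / 2%:R = nrm x - 2%:R^-1 * nrm x by field.
  by rewrite lerD2r.
move=> x; rewrite halfmx_dotc; have [h1 _] := he x.
have -> : - (nrm x / 2%:R) = 0 - 2%:R^-1 * nrm x by field.
by rewrite lerD2r.
Qed.

Lemma herm_sum (I : finType) (c : I -> C) (F : I -> 'M[C]_k) :
  (forall i, (c i)^* = c i) -> (forall i, (F i) ^t* = F i) ->
  (\sum_i c i *: F i) ^t* = \sum_i c i *: F i.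
Proof.
move=> hc hF; apply/matrixP => a b; rewrite !mxE !summxE rmorph_sum.
apply: eq_bigr => i _; have := congr1 (fun B => B a b) (hF i).
by rewrite !mxE rmorphM /= hc => <-.
Qed.

Lemma quad_small A v : (k <= 1)%N -> dotc v (A *m v) = \tr A * nrm v.
Proof.
rewrite /nrm !dotcE /mxtrace; case: k A v => [|[|//]] A v _.
  by rewrite !big_ord0 mul0r.
by rewrite !big_ord1 mxE big_ord1 mulrCA.
Qed.

End Gen5.

End PartH.
Import PartH.

Module PartI.

Section PM.
Variable R : realFieldType.
Variable I : finType.
Implicit Types a : I -> R.

Lemma sum_sq_le a : (\sum_i a i) ^+ 2 <= #|I|%:R * \sum_i a i ^+ 2.
Proof.
have h0 : 0 <= \sum_(i : I) \sum_(j : I) (a i - a j) ^+ 2.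
  by apply: sumr_ge0 => i _; apply: sumr_ge0 => j _; apply: sqr_ge0.
have e : \sum_(i : I) \sum_(j : I) (a i - a j) ^+ 2 =
   (\sum_(i : I) \sum_(j : I) (a i ^+ 2)) + (\sum_(i : I) \sum_(j : I) (a j ^+ 2)) - 2%:R * (\sum_(i : I) \sum_(j : I) (a i * a j)).
  rewrite mulr_sumr -big_split -sumrB /=; apply: eq_bigr => i _.
  rewrite mulr_sumr -big_split -sumrB /=; apply: eq_bigr => j _; ring.
have e1 : \sum_(i : I) \sum_(j : I) (a i * a j) = (\sum_i a i) ^+ 2.
  by rewrite expr2 big_distrlr.
have e2 : \sum_(i : I) \sum_(j : I) (a i ^+ 2) = #|I|%:R * \sum_i a i ^+ 2.
  by rewrite mulr_sumr; apply: eq_bigr => i _; rewrite sumr_const mulr_natl.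
have e3 : \sum_(i : I) \sum_(j : I) (a j ^+ 2) = #|I|%:R * \sum_i a i ^+ 2.
  by rewrite sumr_const mulr_natl.
rewrite e e1 e2 e3 in h0; lra.
Qed.

Lemma pow_mean a j : (\sum_i a i) ^+ (2 ^ j.+1) <=
  #|I|%:R ^+ (2 ^ j.+1 - 1) * \sum_i a i ^+ (2 ^ j.+1).
Proof.
elim: j => [|j IH]; first by rewrite expn1 expr1 sum_sq_le.
have hK : 0 <= #|I|%:R :> R by rewrite ler0n.
have -> : (2 ^ j.+2 = 2 ^ j.+1 * 2)%N by rewrite expnS mulnC.
move: IH; set q := (2 ^ j.+1)%N => IH.
have hq : (0 < q)%N by rewrite expn_gt0.
have hev : ~~ odd q by rewrite /q oddX.
rewrite !exprM.
apply: (le_trans (y := (#|I|%:R ^+ (q - 1) * \sum_i a i ^+ q) ^+ 2)).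
  rewrite ler_pXn2r // nnegrE; first by rewrite exprn_even_ge0.
  by apply: le_trans IH; rewrite exprn_even_ge0.
rewrite exprMn -exprM.
apply: (le_trans (y := #|I|%:R ^+ ((q - 1) * 2) * (#|I|%:R * \sum_i (a i ^+ q) ^+ 2))).
  by rewrite ler_wpM2l ?exprn_ge0 // sum_sq_le.
rewrite mulrA -exprSr.
have -> : ((q - 1) * 2).+1 = (q * 2 - 1)%N.
  by case: q hq {hev IH} => // q0 _; lia.
by under eq_bigr do rewrite -exprM.
Qed.
End PM.

End PartI.
Import PartI.

Module PartJ.
Local Open Scope sesquilinear_scope.


Section ReLemmas.
Variable R : realType.
Implicit Types x y z : R[i].

Lemma ReD x y : complex.Re (x + y) = complex.Re x + complex.Re y.
Proof. by case: x; case: y. Qed.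
Lemma ReN x : complex.Re (- x) = - complex.Re x.
Proof. by case: x. Qed.
Lemma ReB x y : complex.Re (x - y) = complex.Re x - complex.Re y.
Proof. by rewrite ReD ReN. Qed.
Lemma Re0 : complex.Re (0 : R[i]) = 0. Proof. by []. Qed.
Lemma Re_sum (I : finType) (F : I -> R[i]) :
  complex.Re (\sum_i F i) = \sum_i complex.Re (F i).
Proof. exact: (big_morph _ ReD Re0). Qed.
Lemma Re_realC (a : R) : complex.Re (a%:C)%C = a. Proof. by []. Qed.
Lemma Re_scal (a : R) z : complex.Re ((a%:C)%C * z) = a * complex.Re z.
Proof. by case: z => x y /=; ring. Qed.
Lemma Re_le x y : x <= y -> complex.Re x <= complex.Re y.
Proof. by rewrite lecE => /andP []. Qed.
Lemma half_C : (2%:R^-1 : R[i]) = ((2%:R^-1 : R)%:C)%C.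
Proof. by rewrite fmorphV /= rmorph_nat. Qed.
Lemma Re_half : complex.Re (2%:R^-1 : R[i]) = 2%:R^-1.
Proof. by rewrite half_C. Qed.
Lemma nat_C m : (m%:R : R[i]) = ((m%:R : R)%:C)%C.
Proof. by rewrite rmorph_nat. Qed.
Lemma normC_real z : `|z| = ((complex.Re `|z|)%:C)%C.
Proof. by rewrite normc_def. Qed.
Lemma Re_norm_ge z : `|complex.Re z| <= complex.Re `|z|.
Proof.
have h1 : 0 <= complex.Re `|z| by rewrite normc_def /= sqrtr_ge0.
rewrite -(ler_pXn2r (n := 2)) // ?nnegrE //.
rewrite normc_def /= sqr_sqrtr ?addr_ge0 ?sqr_ge0 // real_normK ?num_real //.
by rewrite lerDl sqr_ge0.
Qed.
End ReLemmas.

End PartJ.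
Import PartJ.

Module PartK.
Local Open Scope sesquilinear_scope.


Section Succ.
Variable R : realType.
Variables n q : nat.
Variable psi : boolfun n -> 'cV[R[i]]_(2 ^ q).
Variable E : bits n -> 'M[R[i]]_(2 ^ q).
Hypothesis hs : forall L, is_state (psi L).
Hypothesis he : forall x, is_effect (E x).

Definition Mx (x : bits n) := halfmx (E x).
Definition bet (L : boolfun n) := complex.Re (dotc (psi L) (SL Mx L *m psi L)).

Lemma nrm_psi (L : boolfun n) : nrm (psi L) = 1.
Proof. exact: hs. Qed.

Lemma E_herm (x : bits n) : (E x) ^t* = E x.
Proof. by have [] := he x. Qed.

Lemma E_bounds (x : bits n) v : 0 <= dotc v (E x *m v) /\ dotc v (E x *m v) <= nrm v.
Proof. have [_ h] := he x; by rewrite /dotc mulmxA; apply: h. Qed.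

Lemma prob_oneE (x : bits n) (L : boolfun n) : prob_one (E x) (psi L) = complex.Re (dotc (psi L) (E x *m psi L)).
Proof. by rewrite /prob_one /dotc mulmxA. Qed.

Lemma term_eq (x : bits n) (L : boolfun n) :
  (if L x then prob_one (E x) (psi L) else 1 - prob_one (E x) (psi L)) =
  2%:R^-1 + complex.Re (eps L x * dotc (psi L) (Mx x *m psi L)).
Proof.
rewrite prob_oneE /Mx halfmx_dotc nrm_psi mulr1 /eps.
case: (L x); rewrite ?mul1r ?mulN1r ?ReN ReB Re_half; lra.
Qed.

Lemma bet_eq (L : boolfun n) : bet L = \sum_x complex.Re (eps L x * dotc (psi L) (Mx x *m psi L)).
Proof.
rewrite /bet /SL mulmx_suml dotc_sumr Re_sum; apply: eq_bigr => x _.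
by rewrite -scalemxAl dotcZr.
Qed.

Lemma succ_eq : success_prob psi E =
  2%:R^-1 + (#|{: bits n}|%:R * #|{: boolfun n}|%:R)^-1 * \sum_L bet L.
Proof.
rewrite /success_prob.
under eq_bigr do under eq_bigr do rewrite term_eq.
rewrite (eq_bigr (fun x => #|{: boolfun n}|%:R * 2%:R^-1 +
    \sum_(L : boolfun n) complex.Re (eps L x * dotc (psi L) (Mx x *m psi L)))); last first.
  by move=> x _; rewrite big_split /= sumr_const mulr_natl.
rewrite big_split /= sumr_const exchange_big /=.
under [X in _ * (_ + X)]eq_bigr do rewrite -bet_eq.
have hN : (#|{: bits n}|%:R : R) != 0 by rewrite pnatr_eq0 -lt0n; apply/card_gt0P; exists [tuple of nseq n false].
have hK : (#|{: boolfun n}|%:R : R) != 0 by rewrite pnatr_eq0 -lt0n; apply/card_gt0P; exists [ffun=> false].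
rewrite mulrDr; congr (_ + _).
rewrite -mulr_natl; field.
by rewrite hN hK.
Qed.

Lemma succ_le1 : success_prob psi E <= 1.
Proof.
rewrite /success_prob.
have hb : forall (x : bits n) (L : boolfun n), (if L x then prob_one (E x) (psi L) else 1 - prob_one (E x) (psi L)) <= 1.
  move=> x L; have [h1 h2] := E_bounds x (psi L); rewrite nrm_psi in h2.
  have := Re_le h1; have := Re_le h2; rewrite -prob_oneE.
  by case: (L x) => /=; lra.
have hN : (0 : R) < #|{: bits n}|%:R by rewrite ltr0n; apply/card_gt0P; exists [tuple of nseq n false].
have hK : (0 : R) < #|{: boolfun n}|%:R by rewrite ltr0n; apply/card_gt0P; exists [ffun=> false].
rewrite ler_pdivrMl ?mulr_gt0 // mulr1.
apply: (le_trans (y := \sum_(x : bits n) \sum_(L : boolfun n) (1 : R))).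
  by apply: ler_sum => x _; apply: ler_sum => L _; apply: hb.
by rewrite sumr_const sumr_const mulrC mulr_natr.
Qed.

End Succ.

End PartK.
Import PartK.

Module PartL.
Local Open Scope sesquilinear_scope.


Section Main.
Variable R : realType.
Variables n q : nat.
Variable psi : boolfun n -> 'cV[R[i]]_(2 ^ q).
Variable E : bits n -> 'M[R[i]]_(2 ^ q).
Hypothesis hs : forall L, is_state (psi L).
Hypothesis he : forall x, is_effect (E x).

Lemma eps_real (L : boolfun n) (x : bits n) : (eps L x : R[i])^* = eps L x.
Proof. by rewrite /eps; case: (L x); rewrite ?rmorphN /= conjC1. Qed.

Lemma S_herm (L : boolfun n) : (SL (Mx E) L) ^t* = SL (Mx E) L.
Proof.
apply: herm_sum => x; first exact: eps_real.
by apply: halfmx_herm; apply: E_herm.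
Qed.

Lemma bet_zero : q = 0%N -> \sum_L bet psi E L = 0.
Proof.
move=> hq0; have hk : (2 ^ q <= 1)%N by rewrite hq0.
rewrite (eq_bigr (fun L => complex.Re (\tr (SL (Mx E) L)))); last first.
  by move=> L _; rewrite /bet quad_small // nrm_psi // mulr1.
rewrite -Re_sum.
have -> : \sum_(L : boolfun n) \tr (SL (Mx E) L) = 0; last by [].
rewrite (eq_bigr (fun L => \sum_x eps L x * \tr (Mx E x))); last first.
  by move=> L _; rewrite /SL raddf_sum /=; apply: eq_bigr => x _; rewrite mxtraceZ.
rewrite exchange_big /= big1 // => x _; rewrite -mulr_suml.
have := coef_sum R[i] [:: x]; rewrite /evenseq.
under eq_bigr do rewrite big_seq1.
move=> ->; case: ifP; last by rewrite mul0r.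
by move/forallP/(_ x); rewrite /= eqxx.
Qed.


Lemma bet_pow (L : boolfun n) j :
  bet psi E L ^+ (2 ^ j.+1) <= complex.Re (\tr (SL (Mx E) L ^+ (2 ^ j.+1))).
Proof.
set z := dotc (psi L) (SL (Mx E) L *m psi L).
have hz := quad_tr j (S_herm L) (nrm_psi hs L).
have := Re_le hz; rewrite [`|_|]normC_real -rmorphXn Re_realC => h2.
apply: le_trans h2.
apply: (le_trans (ler_norm _)); rewrite normrX ler_pXn2r ?expn_gt0 // ?nnegrE ?normr_ge0 //.
  exact: Re_norm_ge.
exact: le_trans (normr_ge0 _) (Re_norm_ge z).
Qed.

Lemma hMx : forall x v, 4%:R * nrm (Mx E x *m v) <= nrm v.
Proof. by move=> x; apply: halfmx_contract; [apply: E_herm | apply: E_bounds]. Qed.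

Lemma T_bound m :
  2%:R ^+ m * complex.Re (\sum_(L : boolfun n) \tr (SL (Mx E) L ^+ m)) <=
  ((2 ^ #|{: bits n}|) * 2 ^ q * cnt (bits n) m)%:R.
Proof.
have hb := sum_tr_bound hMx m.
have hr := Re_le hb; rewrite [X in _ <= complex.Re X]nat_C (nat_C _ 2) -rmorphXn Re_scal /= in hr.
apply: le_trans hr; rewrite ler_wpM2l ?exprn_ge0 ?ler0n //.
exact: le_trans (ler_norm _) (Re_norm_ge _).
Qed.


Lemma bet_bound : (0 < q)%N ->
  (\sum_L bet psi E L) ^+ 2 <=
  (#|{: boolfun n}|%:R) ^+ 2 * (2 * q)%:R * #|{: bits n}|%:R.
Proof.
move=> hq.
have := trunc_log_bounds (p := 2) (n := q) (erefl _) hq => /= /andP [tb1 tb2].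
move: tb1 tb2; set j := trunc_log 2 q => tb1 tb2.
set K := (#|{: boolfun n}|%:R : R); set N := (#|{: bits n}|%:R : R).
set s := \sum_L bet psi E L.
set T := complex.Re (\sum_(L : boolfun n) \tr (SL (Mx E) L ^+ (2 ^ j.+1))).
have hK : 0 <= K by rewrite ler0n.
have hN : 0 <= N by rewrite ler0n.
have h2 : s ^+ (2 ^ j.+1) <= K ^+ (2 ^ j.+1 - 1) * T.
  apply: le_trans (pow_mean _ j) _.
  rewrite ler_wpM2l ?exprn_ge0 // /T Re_sum; apply: ler_sum => L _; exact: bet_pow.
have h3 := T_bound (2 ^ j.+1); rewrite -/T in h3.
have hc : (cnt (bits n) (2 ^ j.+1) <= (2 ^ j).*2 ^ (2 ^ j) * #|{: bits n}| ^ (2 ^ j))%N.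
  by have := cnt_bound (bits n) (2 ^ j); rewrite -mul2n -expnS.
have hKn : (2 ^ #|{: bits n}|)%N = #|{: boolfun n}| by rewrite card_ffun card_bool.
set h := (2 ^ j)%N in tb1 tb2 hc.
have hm : (2 ^ j.+1 = h.*2)%N by rewrite expnS mul2n.
rewrite hm in h2 h3.
have hmq : (h.*2 <= (2 * q))%N by rewrite -mul2n leq_mul2l.
have hqm : (q <= h.*2)%N by rewrite -mul2n -expnS ltnW.
have h4 : 2%:R ^+ h.*2 * T <= K * 2%:R ^+ h.*2 * ((h.*2)%:R * N) ^+ h.
  apply: (le_trans h3).
  rewrite hm in hc.
  apply: (le_trans (y := ((2 ^ #|{: bits n}| * 2 ^ (h.*2)) * (h.*2 ^ h * #|{: bits n}| ^ h))%:R)).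
    rewrite ler_nat -!mulnA leq_mul // leq_mul // leq_pexp2l //.
  by rewrite !natrM !natrX /K /N -hKn natrX exprMn mulrA.
have hh : (0 < h)%N by rewrite expn_gt0.
have h2m : 0 < 2%:R ^+ h.*2 :> R by rewrite exprn_gt0 ?ltr0n.
have hT : T <= K * ((h.*2)%:R * N) ^+ h.
  rewrite -(ler_pM2l h2m); apply: (le_trans h4); rewrite le_eqVlt; apply/orP; left.
  by apply/eqP; ring.
have h5 : (s ^+ 2) ^+ h <= (K ^+ 2 * (h.*2)%:R * N) ^+ h.
  rewrite -exprM mul2n.
  apply: (le_trans h2); apply: (le_trans (ler_wpM2l (exprn_ge0 _ hK) hT)).
  have e : K ^+ (h.*2 - 1) * K = (K ^+ 2) ^+ h.
    by rewrite -exprSr -exprM subn1 prednK ?double_gt0 // mul2n.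
  by rewrite mulrA e -exprMn mulrA.
rewrite ler_pXn2r // ?nnegrE ?sqr_ge0 ?mulr_ge0 ?ler0n ?sqr_ge0 // in h5.
apply: (le_trans h5); rewrite ler_wpM2r // ler_wpM2l ?sqr_ge0 // ler_nat.
exact: hmq.
Qed.

End Main.

End PartL.
Import PartL.


Lemma final_arith (R : realType) (B y r : R) :
  B <= 2%:R^-1 -> B ^+ 2 <= 2%:R * r -> 0 <= y -> y ^+ 3 = r -> B <= 2%:R * y.
Proof.
move=> hB hB2 hy hyr.
case: (lerP y 2%:R) => hy2; last by lra.
have h1 : B ^+ 2 <= (2%:R * y) ^+ 2.
  apply: (le_trans hB2); rewrite -hyr.
  have : y ^+ 3 <= 2%:R * y ^+ 2.
    by rewrite exprS; apply: ler_wpM2r; rewrite ?sqr_ge0.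
  move=> h; rewrite exprMn; lra.
apply: (le_trans (ler_norm B)).
rewrite -(ler_pXn2r (n := 2)) // ?nnegrE ?normr_ge0 ?mulr_ge0 ?ler0n //.
by rewrite real_normK ?num_real.
Qed.

Theorem mainTheorem10 (R : realType) :
  exists c : R, 0 < c /\
  forall (p : nat -> nat) (n : nat)
         (psi : boolfun n -> 'cV[R[i]]_(2 ^ p n))
         (E : bits n -> 'M[R[i]]_(2 ^ p n)),
    (forall L, is_state (psi L)) ->
    (forall x, is_effect (E x)) ->
    success_prob psi E <= 2^-1 + c * powR ((p n)%:R / 2 ^+ n) (3%:R^-1).
Proof.
exists 2%:R; split; first by rewrite ltr0n.
move=> p n psi E hs he.
set y := powR _ _.
have hy : 0 <= y by apply: powR_ge0.
have hN : #|{: bits n}|%:R = 2 ^+ n :> R by rewrite card_tuple card_bool natrX.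
set K := (#|{: boolfun n}|%:R : R).
have hK : 0 < K by rewrite ltr0n; apply/card_gt0P; exists [ffun=> false].
have hN0 : 0 < 2 ^+ n :> R by rewrite exprn_gt0 ?ltr0n.
have hS := succ_eq E hs.
have hS1 := succ_le1 hs he.
rewrite hN -/K in hS.
set s := \sum_L bet psi E L in hS.
set B := (2 ^+ n * K)^-1 * s in hS.
rewrite hS lerD2l.
case: (posnP (p n)) => hq.
  by rewrite /B /s (bet_zero E hs hq) mulr0 mulr_ge0 ?ler0n.
apply: (final_arith (r := (p n)%:R / 2 ^+ n)) => //.
- by move: hS1; rewrite hS; lra.
- have hb := bet_bound hs he hq; rewrite -/K -/s hN in hb.
  rewrite /B exprMn exprVn.
  rewrite ler_pdivrMl ?exprn_gt0 ?mulr_gt0 //.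
  apply: (le_trans hb); rewrite le_eqVlt; apply/orP; left; apply/eqP.
  rewrite natrM; field; by rewrite gt_eqF.
- rewrite /y -powR_mulrn ?powR_ge0 // -powRrM mulVf ?pnatr_eq0 // powRr1 //.
  by rewrite divr_ge0 ?ler0n ?exprn_ge0.
Qed.
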